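(* For each pair of integers $k\ge l\ge0$, $S_u^{k-l+1}$ annihilates $\mathcal{H}_{k,l}(\mathbb{R}^{2m},\mathbb{C})$, whereas for every integer $0\le j\le k-l$ the operator $S_u^j$ is not identically zero on $\mathcal{H}_{k,l}(\mathbb{R}^{2m},\mathbb{C})$.
   Context: Fix an integer $m>4$. For $x,u\in\mathbb{R}^m$ let $\mathcal{P}_{p,q}(\mathbb{R}^{2m},\mathbb{C})$ be complex polynomials of degree $p$ in $x$ and $q$ in $u$. Write $|x|^2=\sum x_j^2$, $|u|^2$ similarly, $\Delta_x=\sum\partial_{x_j}^2$, $\Delta_u=\sum\partial_{u_j}^2$, $\langle\partial_u,\partial_x\rangle=\sum\partial_{u_j}\partial_{x_j}$, $\langle x,\partial_u\rangle=\sum x_j\partial_{u_j}$, $\langle u,\partial_x\rangle=\sum u_j\partial_{x_j}$, $\ker(D_1,\dots,D_r)=\bigcap\ker D_i$. Every $P\in\mathcal{P}_{p,q}$ is uniquely $\sum_{a,b\ge0}|x|^{2a}|u|^{2b}H'_{p-2a,q-2b}$ with $H'_{p-2a,q-2b}\in\mathcal{P}_{p-2a,q-2b}\cap\ker(\Delta_x,\Delta_u)$; $\pi_{\mathfrak{s}}P:=H'_{p,q}$. $S_u=\pi_{\mathfrak{s}}\langle u,\partial_x\rangle$ on $\ker(\Delta_x,\Delta_u)$. For $k\ge l\ge0$, $\mathcal{H}_{k,l}=\mathcal{P}_{k,l}\cap\ker(\Delta_x,\Delta_u,\langle\partial_u,\partial_x\rangle,\langle x,\partial_u\rangle)$. 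*)

(* Defs.v *)
From HB Require Import structures.
From mathcomp Require Import all_boot all_algebra.
From mathcomp Require Import Rstruct complex.
From mathcomp Require Import mpoly.
From Stdlib Require Import ClassicalEpsilon.
Set Implicit Arguments. Unset Strict Implicit. Unset Printing Implicit Defensive.
Import GRing.Theory.
Local Open Scope ring_scope.

Definition C : fieldType := complex Rdefinitions.R.

Section Defs.
Variable m : nat.

(* complex polynomials on R^{2m}: variables x_1..x_m are indices lshift m j,
   u_1..u_m are indices rshift m j, j : 'I_m *)
Definition Pol := {mpoly C[m + m]}.

Definition xi (j : 'I_m) : 'I_(m + m) := lshift m j.
Definition ui (j : 'I_m) : 'I_(m + m) := rshift m j.

Definition bihomog (p q : nat) (P : Pol) : Prop :=
  forall mon : 'X_{1.. m + m}, mon \in msupp P ->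
    (\sum_(j < m) mon (xi j))%N = p /\ (\sum_(j < m) mon (ui j))%N = q.

Definition dx (j : 'I_m) (P : Pol) : Pol := mderiv (xi j) P.
Definition du (j : 'I_m) (P : Pol) : Pol := mderiv (ui j) P.

Definition Lap_x (P : Pol) : Pol := \sum_(j < m) dx j (dx j P).
Definition Lap_u (P : Pol) : Pol := \sum_(j < m) du j (du j P).
Definition Du_Dx (P : Pol) : Pol := \sum_(j < m) du j (dx j P).
Definition X_Du (P : Pol) : Pol := \sum_(j < m) 'X_(xi j) * du j P.
Definition U_Dx (P : Pol) : Pol := \sum_(j < m) 'X_(ui j) * dx j P.

Definition normx2 : Pol := \sum_(j < m) 'X_(xi j) ^+ 2.
Definition normu2 : Pol := \sum_(j < m) 'X_(ui j) ^+ 2.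

(* pi_s P = H'_{p,q}: the (unique) component H in ker(Lap_x, Lap_u) with
   P = H + |x|^2 A + |u|^2 B (all terms with a >= 1 or b >= 1 of the
   decomposition P = sum |x|^{2a}|u|^{2b} H'_{p-2a,q-2b} are of this form),
   required to lie in P_{p,q} when P does. *)
Definition pi_s_spec (P H : Pol) : Prop :=
  (forall p q, bihomog p q P -> bihomog p q H) /\
  Lap_x H = 0 /\ Lap_u H = 0 /\
  exists A B : Pol, P = H + normx2 * A + normu2 * B.

Definition pi_s (P : Pol) : Pol := epsilon (inhabits 0) (pi_s_spec P).

Definition S_u (P : Pol) : Pol := pi_s (U_Dx P).

Definition Hkl (k l : nat) (P : Pol) : Prop :=
  bihomog k l P /\ Lap_x P = 0 /\ Lap_u P = 0 /\ Du_Dx P = 0 /\ X_Du P = 0.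

End Defs.

(* Main.v *)
Require Import Defs.
From mathcomp Require Import all_boot all_algebra.
From mathcomp Require Import mpoly.
From mathcomp Require Import complex Rstruct ring order.
From Stdlib Require Import ClassicalEpsilon.
Set Implicit Arguments. Unset Strict Implicit. Unset Printing Implicit Defensive.
Import GRing.Theory Num.Theory.
Local Open Scope ring_scope.

Section S1.
Variable m : nat.
Local Notation n := (m + m).
Local Notation P := (Pol m).

Lemma mderivXM (i j : 'I_n) (Q : P) :
  mderiv i ('X_j * Q) = (j == i)%:R *: Q + 'X_j * mderiv i Q.
Proof.
rewrite mderivM mderivX mnm1E.
case: (eqVneq j i) => [->|ne] /=; last by rewrite mulr0n !scale0r mul0r.
have -> : (U_(i) - U_(i))%MM = 0%MM by apply/mnmP=> k; rewrite mnmBE mnm0E subnn.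
by rewrite mpolyX0 !scale1r mul1r.
Qed.

Lemma mderiv_sum (i : 'I_n) I (r : seq I) (Pr : pred I) (f : I -> P) :
  mderiv i (\sum_(j <- r | Pr j) f j) = \sum_(j <- r | Pr j) mderiv i (f j).
Proof. exact: raddf_sum. Qed.

Lemma sum_delta (a : 'I_m) (g : 'I_m -> P) :
  \sum_(b < m) ((b == a)%:R *: g b) = g a.
Proof.
rewrite (bigD1 a) //= eqxx scale1r big1 ?addr0 // => b /negbTE ->.
by rewrite scale0r.
Qed.

Lemma sum_delta' (a : 'I_m) (g : 'I_m -> P) :
  \sum_(b < m) ((a == b)%:R *: g b) = g a.
Proof. rewrite -(sum_delta a g); apply: eq_bigr => b _; by rewrite eq_sym. Qed.

Lemma xx (a b : 'I_m) : (xi a == xi b) = (a == b). Proof. exact: eq_lshift. Qed.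
Lemma uu (a b : 'I_m) : (ui a == ui b) = (a == b). Proof. exact: (eq_shift.1.1.2). Qed.
Lemma xu (a b : 'I_m) : (xi a == ui b) = false. Proof. exact: eq_lrshift. Qed.
Lemma ux (a b : 'I_m) : (ui a == xi b) = false. Proof. exact: eq_rlshift. Qed.


Local Notation F := (@U_Dx m).
Local Notation E := (@X_Du m).
Definition Ex (Q : P) : P := \sum_(j < m) 'X_(xi j) * dx j Q.
Definition Eu (Q : P) : P := \sum_(j < m) 'X_(ui j) * du j Q.

Lemma F_is_additive : {morph F : a b / a + b}.
Proof.
move=> a b; rewrite /U_Dx -big_split /=; apply: eq_bigr => j _.
by rewrite /dx mderivD mulrDr.
Qed.
Lemma FZ c (Q : P) : F (c *: Q) = c *: F Q.
Proof.
rewrite /U_Dx scaler_sumr; apply: eq_bigr => j _.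
by rewrite /dx mderivZ scalerAr.
Qed.
Lemma F0 : F 0 = 0.
Proof. by rewrite /U_Dx big1 // => j _; rewrite /dx mderiv0 mulr0. Qed.
Lemma FN (Q : P) : F (- Q) = - F Q.
Proof. by rewrite -scaleN1r FZ scaleN1r. Qed.
Lemma FB (a b : P) : F (a - b) = F a - F b.
Proof. by rewrite F_is_additive FN. Qed.
Lemma F_sum I (r : seq I) (f : I -> P) :
  F (\sum_(j <- r) f j) = \sum_(j <- r) F (f j).
Proof.
elim: r => [|x r IH]; first by rewrite !big_nil F0.
by rewrite !big_cons F_is_additive IH.
Qed.

Lemma dxF a (Q : P) : dx a (F Q) = F (dx a Q).
Proof.
rewrite /U_Dx /dx mderiv_sum; apply: eq_bigr => j _.
by rewrite mderivXM ux scale0r add0r mderiv_comm.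
Qed.

Lemma duF a (Q : P) : du a (F Q) = dx a Q + F (du a Q).
Proof.
rewrite /U_Dx /dx /du mderiv_sum.
rewrite (eq_bigr (fun j => (j == a)%:R *: mderiv (xi j) Q +
   'X_(ui j) * mderiv (xi j) (mderiv (ui a) Q))); last first.
  by move=> j _; rewrite mderivXM uu mderiv_comm.
by rewrite big_split /= sum_delta.
Qed.

Lemma FXx a (R : P) : F ('X_(xi a) * R) = 'X_(ui a) * R + 'X_(xi a) * F R.
Proof.
rewrite /U_Dx /dx mulr_sumr.
rewrite (eq_bigr (fun j => (a == j)%:R *: ('X_(ui j) * R) +
   'X_(xi a) * ('X_(ui j) * mderiv (xi j) R))); last first.
  by move=> j _; rewrite mderivXM xx mulrDr -scalerAr mulrCA.
by rewrite big_split /= sum_delta'.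
Qed.

Lemma FXu a (R : P) : F ('X_(ui a) * R) = 'X_(ui a) * F R.
Proof.
rewrite /U_Dx /dx mulr_sumr; apply: eq_bigr => j _.
by rewrite mderivXM ux scale0r add0r mulrCA.
Qed.


Lemma duD a (x y : P) : du a (x + y) = du a x + du a y.
Proof. exact: mderivD. Qed.

Lemma I1 (Q : P) : Lap_x (F Q) = F (Lap_x Q).
Proof.
rewrite /Lap_x F_sum; apply: eq_bigr => a _; by rewrite !dxF.
Qed.

Lemma I2 (Q : P) : Lap_u (F Q) = F (Lap_u Q) + (Du_Dx Q + Du_Dx Q).
Proof.
rewrite /Lap_u /Du_Dx F_sum -!big_split /=; apply: eq_bigr => a _.
rewrite duF duD duF /du /dx.
rewrite [mderiv (xi a) (mderiv (ui a) Q)]mderiv_comm.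
by rewrite addrC addrA.
Qed.

Lemma I3 (Q : P) : Du_Dx (F Q) = F (Du_Dx Q) + Lap_x Q.
Proof.
rewrite /Lap_x /Du_Dx F_sum -big_split /=; apply: eq_bigr => a _.
by rewrite dxF duF addrC.
Qed.

Lemma I4 (Q : P) : E (F Q) = F (E Q) + Ex Q - Eu Q.
Proof.
have h1 : E (F Q) = Ex Q + \sum_(a < m) 'X_(xi a) * F (du a Q).
  rewrite /X_Du /Ex -big_split /=; apply: eq_bigr => a _.
  by rewrite duF mulrDr.
have h2 : F (E Q) = Eu Q + \sum_(a < m) 'X_(xi a) * F (du a Q).
  rewrite /X_Du /Eu F_sum -big_split /=; apply: eq_bigr => a _.
  by rewrite FXx.
rewrite h1 h2.
ring.
Qed.

Lemma I5 (Q : P) : Ex (F Q) = F (Ex Q) - F Q.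
Proof.
have h2 : F (Ex Q) = F Q + \sum_(a < m) 'X_(xi a) * F (dx a Q).
  rewrite /Ex {2}/U_Dx F_sum -big_split /=; apply: eq_bigr => a _.
  by rewrite FXx.
rewrite h2 addrC addKr /Ex; apply: eq_bigr => a _; by rewrite dxF.
Qed.

Lemma I6 (Q : P) : Eu (F Q) = F (Eu Q) + F Q.
Proof.
have h1 : Eu (F Q) = F Q + \sum_(a < m) 'X_(ui a) * F (du a Q).
  rewrite /Eu {2}/U_Dx -big_split /=; apply: eq_bigr => a _.
  by rewrite duF mulrDr.
rewrite h1 addrC; congr (_ + _); rewrite /Eu F_sum; apply: eq_bigr => a _.
by rewrite FXu.
Qed.


Lemma X_deriv_mon (i : 'I_n) (mn : 'X_{1..n}) :
  'X_i * mderiv i ('X_[mn] : P) = (mn i)%:R *: 'X_[mn].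
Proof.
rewrite mderivX -scalerAr -mpolyXD.
have [->|nz] := eqVneq (mn i) 0%N; first by rewrite !scale0r.
congr (_ *: 'X_[_]); apply/mnmP => k; rewrite mnmDE mnmBE mnm1E.
case: (eqVneq i k) => [<-|_] /=; last by rewrite subn0.
by rewrite subnKC // lt0n.
Qed.

Lemma X_deriv (i : 'I_n) (Q : P) :
  'X_i * mderiv i Q = \sum_(mn <- msupp Q) Q@_mn *: ((mn i)%:R *: 'X_[mn]).
Proof.
rewrite [in LHS](mpolyE Q) mderiv_sum mulr_sumr; apply: eq_bigr => mn _.
by rewrite mderivZ -scalerAr X_deriv_mon.
Qed.

Lemma Euler_gen (s : 'I_m -> 'I_n) p (Q : P) :
  (forall mn, mn \in msupp Q -> (\sum_(j < m) mn (s j))%N = p) ->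
  \sum_(j < m) 'X_(s j) * mderiv (s j) Q = p%:R *: Q.
Proof.
move=> hQ.
under eq_bigr do rewrite X_deriv.
rewrite exchange_big /= [in RHS](mpolyE Q) scaler_sumr big_seq [in RHS]big_seq.
apply: eq_bigr => mn hmn.
rewrite -scaler_sumr -scaler_suml -natr_sum hQ //.
by rewrite scalerA mulrC -scalerA.
Qed.

Lemma Euler_x p q (Q : P) : bihomog p q Q -> Ex Q = p%:R *: Q.
Proof. by move=> h; apply: Euler_gen => mn /h []. Qed.
Lemma Euler_u p q (Q : P) : bihomog p q Q -> Eu Q = q%:R *: Q.
Proof. by move=> h; apply: Euler_gen => mn /h []. Qed.


Lemma sum_ext (T : eqType) (r1 r2 : seq T) (f : T -> C) :
  uniq r1 -> uniq r2 -> (forall x, f x != 0 -> (x \in r1) && (x \in r2)) ->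
  \sum_(x <- r1) f x = \sum_(x <- r2) f x.
Proof.
move=> u1 u2 h.
have e r : \sum_(x <- r) f x = \sum_(x <- [seq x <- r | f x != 0]) f x.
  rewrite big_filter [RHS]big_mkcond /=; apply: eq_bigr => x _.
  by case: eqP => [->|].
rewrite e (e r2); apply: perm_big; apply: uniq_perm; rewrite ?filter_uniq //.
move=> x; rewrite !mem_filter; case: (boolP (f x != 0)) => //= /h /andP[-> ->].
by [].
Qed.

Definition w (mn : 'X_{1..n}) : nat := (\prod_(i < n) (mn i)`!)%N.
Definition fip (A B : P) : C :=
  \sum_(mn <- msupp A) A@_mn * (B@_mn)^* * (w mn)%:R.

Lemma fip_ext (A B : P) r : uniq r ->
  (forall mn, A@_mn != 0 -> B@_mn != 0 -> mn \in r) ->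
  fip A B = \sum_(mn <- r) A@_mn * (B@_mn)^* * (w mn)%:R.
Proof.
move=> ur h; rewrite /fip; apply: sum_ext; [exact: msupp_uniq | exact: ur | ].
move=> mn; have [->|nA] := eqVneq A@_mn 0; first by rewrite !mul0r eqxx.
have [->|nB] := eqVneq B@_mn 0; first by rewrite conjC0 mulr0 mul0r eqxx.
by rewrite mcoeff_msupp nA h.
Qed.

Lemma fipDl (A1 A2 B : P) : fip (A1 + A2) B = fip A1 B + fip A2 B.
Proof.
have hr : uniq (undup (msupp A1 ++ msupp A2)) by exact: undup_uniq.
have memr mn : A1@_mn != 0 \/ A2@_mn != 0 -> mn \in undup (msupp A1 ++ msupp A2).
  by rewrite mem_undup mem_cat !mcoeff_msupp => -[->|->]; rewrite ?orbT.
rewrite (fip_ext (r := undup (msupp A1 ++ msupp A2))) //; last first.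
  move=> mn; rewrite mcoeffD => h _; apply: memr.
  by case: (eqVneq A1@_mn 0) h => [->|]; [rewrite add0r; right|left].
rewrite (fip_ext (A := A1) (r := undup (msupp A1 ++ msupp A2))) //; last by move=> mn h _; apply: memr; left.
rewrite (fip_ext (A := A2) (r := undup (msupp A1 ++ msupp A2))) //; last by move=> mn h _; apply: memr; right.
rewrite -big_split; apply: eq_bigr => mn _ /=.
by rewrite mcoeffD !mulrDl.
Qed.

Lemma fipZl c (A B : P) : fip (c *: A) B = c * fip A B.
Proof.
rewrite (fip_ext (r := msupp A)) ?msupp_uniq //; last first.
  by move=> mn; rewrite mcoeffZ mcoeff_msupp => h _; apply: contraNneq h => ->; rewrite mulr0.
rewrite /fip mulr_sumr; apply: eq_bigr => mn _; by rewrite mcoeffZ !mulrA.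
Qed.

Lemma fip0l (B : P) : fip 0 B = 0.
Proof. by rewrite /fip msupp0 big_nil. Qed.

Lemma fip_suml I (r : seq I) (f : I -> P) (B : P) :
  fip (\sum_(i <- r) f i) B = \sum_(i <- r) fip (f i) B.
Proof.
elim: r => [|x r IH]; first by rewrite !big_nil fip0l.
by rewrite !big_cons fipDl IH.
Qed.

Lemma fipC (A B : P) : fip A B = (fip B A)^*.
Proof.
have hr : uniq (undup (msupp A ++ msupp B)) by exact: undup_uniq.
rewrite (fip_ext (r := undup (msupp A ++ msupp B))) //; last first.
  by move=> mn h _; rewrite mem_undup mem_cat mcoeff_msupp h.
rewrite (fip_ext (A := B) (r := undup (msupp A ++ msupp B))) //; last first.
  by move=> mn _ h; rewrite mem_undup mem_cat mcoeff_msupp h.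
rewrite rmorph_sum; apply: eq_bigr => mn _ /=.
by rewrite !rmorphM /= conjCK conjC_nat [A@_mn * _]mulrC.
Qed.

Lemma fipDr (A B1 B2 : P) : fip A (B1 + B2) = fip A B1 + fip A B2.
Proof. by rewrite fipC fipDl rmorphD /= -!fipC. Qed.

Lemma fipZr c (A B : P) : fip A (c *: B) = c^* * fip A B.
Proof. by rewrite fipC fipZl rmorphM /= -fipC. Qed.

Lemma fip0r (A : P) : fip A 0 = 0.
Proof. by rewrite fipC fip0l conjC0. Qed.

Lemma fip_sumr I (r : seq I) (f : I -> P) (A : P) :
  fip A (\sum_(i <- r) f i) = \sum_(i <- r) fip A (f i).
Proof.
elim: r => [|x r IH]; first by rewrite !big_nil fip0r.
by rewrite !big_cons fipDr IH.
Qed.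

Lemma w_add1 (i : 'I_n) mn : w (U_(i) + mn)%MM = ((mn i).+1 * w mn)%N.
Proof.
rewrite /w (bigD1 i) //= [in RHS](bigD1 i) //= mnmDE mnm1E eqxx add1n factS mulnA.
congr (_ * _)%N; apply: eq_bigr => k hk; by rewrite mnmDE mnm1E eq_sym (negbTE hk).
Qed.

Lemma fipXl (i : 'I_n) (A B : P) : fip ('X_i * A) B = fip A (mderiv i B).
Proof.
rewrite /fip mulrC (perm_big _ (msuppMX A U_(i))) big_map.
apply: eq_bigr => mn _.
rewrite mcoeffMX mcoeff_deriv [(mn + _)%MM]addmC w_add1 rmorphMn /= natrM -mulr_natr.
rewrite -!mulrA mul1r -mulr_natr. ring.
Qed.

Lemma fipXr (i : 'I_n) (A B : P) : fip A ('X_i * B) = fip (mderiv i A) B.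
Proof. by rewrite fipC fipXl -fipC. Qed.

Lemma fip_ge0 (A : P) : 0 <= fip A A.
Proof.
apply: sumr_ge0 => mn _; apply: mulr_ge0; [exact: mul_conjC_ge0|exact: ler0n].
Qed.

Lemma fip_eq0 (A : P) : fip A A = 0 -> A = 0.
Proof.
move=> /eqP; rewrite /fip psumr_eq0; last first.
  move=> mn _; apply: mulr_ge0; [exact: mul_conjC_ge0|exact: ler0n].
move=> /allP h; apply/mpolyP => mn; rewrite mcoeff0.
case: (boolP (mn \in msupp A)) => [hm|]; last exact: memN_msupp_eq0.
move: (h mn hm) => /=; rewrite mulf_eq0 mul_conjC_eq0 pnatr_eq0.
have : (w mn != 0)%N by rewrite -lt0n /w prodn_gt0 // => k; rewrite fact_gt0.
by move=> /negbTE -> /orP[/eqP|].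
Qed.


Lemma fip_FE (A B : P) : fip (F A) B = fip A (E B).
Proof.
rewrite /U_Dx /X_Du fip_suml fip_sumr; apply: eq_bigr => j _.
by rewrite fipXl fipXr.
Qed.

Lemma Lap_xB (A B : P) : Lap_x (A - B) = Lap_x A - Lap_x B.
Proof. by rewrite /Lap_x -sumrB; apply: eq_bigr => j _; rewrite /dx !mderivB. Qed.
Lemma Lap_uB (A B : P) : Lap_u (A - B) = Lap_u A - Lap_u B.
Proof. by rewrite /Lap_u -sumrB; apply: eq_bigr => j _; rewrite /du !mderivB. Qed.

Lemma fip_normx2 (A D : P) : fip (normx2 m * A) D = fip A (Lap_x D).
Proof.
rewrite /normx2 mulr_suml fip_suml /Lap_x fip_sumr; apply: eq_bigr => j _.
by rewrite expr2 -mulrA !fipXl.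
Qed.
Lemma fip_normu2 (A D : P) : fip (normu2 m * A) D = fip A (Lap_u D).
Proof.
rewrite /normu2 mulr_suml fip_suml /Lap_u fip_sumr; apply: eq_bigr => j _.
by rewrite expr2 -mulrA !fipXl.
Qed.

Lemma pi_s_id (Q : P) : Lap_x Q = 0 -> Lap_u Q = 0 -> pi_s Q = Q.
Proof.
move=> hx hu.
have sp : pi_s_spec Q (pi_s Q).
  apply: epsilon_spec; exists Q; split => //; split => //; split => //.
  by exists 0, 0; rewrite !mulr0 !addr0.
case: sp => _ [hHx [hHu [A [B hQ]]]].
set H := pi_s Q in hHx hHu hQ *.
have hD : Q - H = normx2 m * A + normu2 m * B by rewrite hQ; ring.
have dx0 : Lap_x (Q - H) = 0 by rewrite Lap_xB hx hHx subr0.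
have du0 : Lap_u (Q - H) = 0 by rewrite Lap_uB hu hHu subr0.
have : fip (Q - H) (Q - H) = 0.
  by rewrite {1}hD fipDl fip_normx2 fip_normu2 dx0 du0 !fip0r addr0.
by move/fip_eq0/eqP; rewrite subr_eq0 => /eqP.
Qed.

Definition inv3 (Q : P) := Lap_x Q = 0 /\ Lap_u Q = 0 /\ Du_Dx Q = 0.

Lemma inv3F (Q : P) : inv3 Q -> inv3 (F Q).
Proof.
case=> [hx [hu hd]]; split; first by rewrite I1 hx F0.
split; first by rewrite I2 hu hd F0 !addr0.
by rewrite I3 hd hx F0 addr0.
Qed.

Lemma iter_inv3 j (Q : P) : inv3 Q -> inv3 (iter j F Q).
Proof. by move=> h; elim: j => [|j IH] //; apply: inv3F. Qed.

Lemma iter_S_u j (Q : P) : inv3 Q -> iter j (@S_u m) Q = iter j F Q.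
Proof.
move=> h; elim: j => //= j ->.
have [hx [hu _]] := iter_inv3 j.+1 h.
by rewrite /S_u pi_s_id.
Qed.


Lemma E0 : E 0 = 0.
Proof. by rewrite /X_Du big1 // => j _; rewrite /du mderiv0 mulr0. Qed.

Section SL2.
Variables (k l : nat) (H : P).
Hypothesis hH : Hkl k l H.

Lemma Ex_iter j : Ex (iter j F H) = (k%:R - j%:R) *: iter j F H.
Proof.
elim: j => [|j IH] /=.
  by rewrite subr0; case: hH => hb _; apply: Euler_x hb.
rewrite I5 IH FZ -[X in _ - X = _]scale1r -scalerBl; congr (_ *: _).
by rewrite -addn1 natrD opprD addrA.
Qed.

Lemma Eu_iter j : Eu (iter j F H) = (l%:R + j%:R) *: iter j F H.
Proof.
elim: j => [|j IH] /=.
  by rewrite addr0; case: hH => hb _; apply: Euler_u hb.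
rewrite I6 IH FZ -[X in _ + X = _]scale1r -scalerDl; congr (_ *: _).
by rewrite -addn1 natrD addrA.
Qed.

Lemma E_iter j :
  E (iter j.+1 F H) = (j.+1%:R * (k%:R - l%:R - j%:R)) *: iter j F H.
Proof.
elim: j => [|j IH].
  rewrite /= I4.
  have -> : E H = 0 by case: hH => _ [_ [_ [_ ->]]].
  rewrite F0 add0r (Ex_iter 0) (Eu_iter 0) /= -scalerBl; congr (_ *: _).
  ring.
rewrite [iter j.+2 F H]/= I4 IH FZ -/(iter j.+1 F H).
rewrite Ex_iter Eu_iter -scalerDl -scalerBl; congr (_ *: _).
rewrite -!natr1; ring.
Qed.

Lemma iter_neq0 j : H != 0 -> (l <= k)%N -> (j <= k - l)%N -> iter j F H != 0.
Proof.
move=> hH0 hlk; elim: j => [|j IH] hj //.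
apply/negP => /eqP h0.
have h1 := E_iter j; rewrite h0 E0 in h1.
have c0 : (j.+1%:R * (k%:R - l%:R - j%:R) : C) != 0.
  rewrite -natrB // -natrB; last exact: ltnW.
  rewrite -natrM pnatr_eq0 muln_eq0 negb_or /= subn_eq0 -ltnNge.
  exact: hj.
move: (IH (ltnW hj)); apply/negP; rewrite negbK; apply/eqP.
by rewrite -[iter j F H]scale1r -(mulVf c0) -scalerA -h1 scaler0.
Qed.

End SL2.

End S1.

Section S2.
Import Order.TTheory.
Variable m : nat.
Local Notation n := (m + m).
Local Notation P := (Pol m).
Local Notation F := (@U_Dx m).
Local Notation E := (@X_Du m).

Lemma iter_vanish k l (H : P) : Hkl k l H -> (l <= k)%N -> iter (k - l).+1 F H = 0.
Proof.
move=> hH hl; set G := iter (k - l).+1 F H.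
have EG : E G = 0.
  by rewrite /G (E_iter hH) -natrB // subrr mulr0 scale0r.
have hG : fip (F G) (F G) = - ((k - l).+2)%:R * fip G G.
  rewrite fip_FE I4 EG F0 add0r /G (Ex_iter hH) (Eu_iter hH) -/G -scalerBl fipZr.
  congr (_ * _); rewrite !rmorphB !rmorphD /= !conjC_nat.
  rewrite -!natr1 !natrB //.
  ring.
have h0 : fip G G = 0.
  have h1 := fip_ge0 (F G); have h2 := fip_ge0 G.
  rewrite hG mulNr oppr_ge0 in h1.
  have : ((k - l).+2%:R * fip G G) = 0.
    by apply/eqP; rewrite eq_le h1 mulr_ge0 ?ler0n.
  by move/eqP; rewrite mulf_eq0 pnatr_eq0 /= => /eqP.
exact: fip_eq0.
Qed.

End S2.

Section S3.
Variable m : nat.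
Local Notation n := (m + m).
Local Notation P := (Pol m).

Definition lx (c : 'I_m -> C) : P := \sum_(j < m) c j *: 'X_(xi j).
Definition lu (c : 'I_m -> C) : P := \sum_(j < m) c j *: 'X_(ui j).

Lemma sum_U (j0 : 'I_m) : (\sum_(j < m) (j0 == j))%N = 1%N.
Proof.
rewrite (bigD1 j0) //= eqxx big1 // => j hj; by rewrite eq_sym (negbTE hj).
Qed.

Lemma bh_lx c : bihomog 1 0 (lx c).
Proof.
move=> mon /msupp_sum_le /flattenP [s /mapP [j _ ->]] /msuppZ_le.
rewrite msuppX mem_seq1 => /eqP ->; split.
  by rewrite -[RHS](sum_U j); apply: eq_bigr => i _; rewrite mnm1E xx.
by rewrite big1 // => i _; rewrite mnm1E xu.
Qed.

Lemma bh_lu c : bihomog 0 1 (lu c).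
Proof.
move=> mon /msupp_sum_le /flattenP [s /mapP [j _ ->]] /msuppZ_le.
rewrite msuppX mem_seq1 => /eqP ->; split.
  by rewrite big1 // => i _; rewrite mnm1E ux.
by rewrite -[RHS](sum_U j); apply: eq_bigr => i _; rewrite mnm1E uu.
Qed.

Lemma bhM p q p' q' (A B : P) : bihomog p q A -> bihomog p' q' B ->
  bihomog (p + p')%N (q + q')%N (A * B).
Proof.
move=> hA hB mon /msuppM_le /allpairsP [[m1 m2] /= [h1 h2 ->]].
have [a1 a2] := hA _ h1; have [b1 b2] := hB _ h2.
split.
  by rewrite -a1 -b1 -big_split; apply: eq_bigr => i _; rewrite mnmDE.
by rewrite -a2 -b2 -big_split; apply: eq_bigr => i _; rewrite mnmDE.
Qed.

Lemma bhB p q (A B : P) : bihomog p q A -> bihomog p q B -> bihomog p q (A - B).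
Proof. by move=> hA hB mon /msuppB_le; rewrite mem_cat => /orP[/hA|/hB]. Qed.

Lemma bh1 : bihomog 0 0 (1 : P).
Proof.
move=> mon; rewrite msupp1 mem_seq1 => /eqP ->.
by split; rewrite big1 // => i _; rewrite mnm0E.
Qed.

Lemma bhX p q (A : P) j : bihomog p q A -> bihomog (p * j)%N (q * j)%N (A ^+ j).
Proof.
move=> hA; elim: j => [|j IH]; first by rewrite !muln0 expr0; exact: bh1.
by rewrite exprS !mulnS; apply: bhM.
Qed.


Section Leib.
Variables s t : 'I_m -> 'I_n.
Definition Lop (Q : P) : P := \sum_(j < m) mderiv (s j) (mderiv (t j) Q).
Definition Gam (A B : P) : P :=
  \sum_(j < m) (mderiv (t j) A * mderiv (s j) B + mderiv (s j) A * mderiv (t j) B).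

Lemma LopM A B : Lop (A * B) = Lop A * B + A * Lop B + Gam A B.
Proof.
rewrite /Lop /Gam mulr_suml mulr_sumr -!big_split /=; apply: eq_bigr => j _.
rewrite !mderivM !mderivD !mderivM; ring.
Qed.

Lemma LopD A B : Lop (A + B) = Lop A + Lop B.
Proof. by rewrite /Lop -big_split; apply: eq_bigr => j _; rewrite !mderivD. Qed.

Lemma GamM A1 A2 B : Gam (A1 * A2) B = A1 * Gam A2 B + A2 * Gam A1 B.
Proof.
rewrite /Gam !mulr_sumr -big_split /=; apply: eq_bigr => j _.
rewrite !mderivM; ring.
Qed.

Lemma GamD A1 A2 B : Gam (A1 + A2) B = Gam A1 B + Gam A2 B.
Proof.
rewrite /Gam -big_split /=; apply: eq_bigr => j _.
rewrite !mderivD; ring.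
Qed.

Lemma GamC A B : Gam A B = Gam B A.
Proof. rewrite /Gam; apply: eq_bigr => j _; ring. Qed.

Lemma mderivC1 i c : mderiv i (c *: 1 : P) = 0.
Proof. by rewrite mderivZ -mpolyX0 mderivX mnm0E scale0r scaler0. Qed.

Lemma GamC1 c B : Gam (c *: 1) B = 0.
Proof. by rewrite /Gam big1 // => j _; rewrite !mderivC1 !mul0r addr0. Qed.

Lemma LopC1 c : Lop (c *: 1) = 0.
Proof. by rewrite /Lop big1 // => j _; rewrite !mderivC1 mderiv0. Qed.

Inductive gen (G : P -> Prop) : P -> Prop :=
| genC c : gen G (c *: 1)
| genG g : G g -> gen G g
| genD A B : gen G A -> gen G B -> gen G (A + B)
| genM A B : gen G A -> gen G B -> gen G (A * B).

Lemma gen_Lop (G : P -> Prop) :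
  (forall g g', G g -> G g' -> Gam g g' = 0) -> (forall g, G g -> Lop g = 0) ->
  forall A, gen G A -> Lop A = 0.
Proof.
move=> hG hL.
have h1 A : gen G A -> forall g, G g -> Gam A g = 0.
  elim=> [c|g' hg'|A1 A2 _ IH1 _ IH2|A1 A2 _ IH1 _ IH2] g hg.
  - exact: GamC1.
  - exact: hG.
  - by rewrite GamD IH1 ?IH2 ?addr0.
  - by rewrite GamM IH1 ?IH2 ?mulr0 ?addr0.
have h2 A B : gen G A -> gen G B -> Gam A B = 0.
  move=> hA; elim=> [c|g' hg'|B1 B2 _ IH1 _ IH2|B1 B2 _ IH1 _ IH2].
  - by rewrite GamC GamC1.
  - exact: h1.
  - by rewrite GamC GamD -!(GamC A) IH1 IH2 addr0.
  - by rewrite GamC GamM -!(GamC A) IH1 IH2 !mulr0 addr0.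
move=> A; elim=> [c|g hg|A1 A2 _ IH1 _ IH2|A1 A2 hA1 IH1 hA2 IH2].
- exact: LopC1.
- exact: hL.
- by rewrite LopD IH1 IH2 addr0.
- by rewrite LopM IH1 IH2 h2 // mul0r mulr0 !addr0.
Qed.
End Leib.


Lemma dX1 (i j : 'I_n) : mderiv i ('X_j : P) = (j == i)%:R *: 1.
Proof.
rewrite -[X in mderiv _ X]mulr1 mderivXM -[X in mderiv _ X](scale1r (1 : P)).
by rewrite mderivC1 mulr0 addr0.
Qed.

Definition lf (ty : bool) c : P := if ty then lx c else lu c.
Definition sel (ty : bool) (j : 'I_m) : 'I_n := if ty then xi j else ui j.

Lemma dsel (sg ty : bool) j c :
  mderiv (sel sg j) (lf ty c) = (if sg == ty then c j else 0) *: 1.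
Proof.
rewrite /lf /lx /lu /sel; case: sg; case: ty => /=; rewrite mderiv_sum.
- rewrite -(sum_delta j (fun b => c b *: (1 : P))); apply: eq_bigr => b _.
  by rewrite mderivZ dX1 xx scalerA mulrC -scalerA.
- by rewrite scale0r big1 // => b _; rewrite mderivZ dX1 ux scale0r scaler0.
- by rewrite scale0r big1 // => b _; rewrite mderivZ dX1 xu scale0r scaler0.
- rewrite -(sum_delta j (fun b => c b *: (1 : P))); apply: eq_bigr => b _.
  by rewrite mderivZ dX1 uu scalerA mulrC -scalerA.
Qed.

Lemma sum_if (X Y : bool) (c d : 'I_m -> C) :
  \sum_(j < m) c j * d j = 0 ->
  \sum_(j < m) (if X then c j else 0) * (if Y then d j else 0) = 0.
Proof.
move=> h; case: X; case: Y => //; rewrite big1 // => j _; by rewrite ?mulr0 ?mul0r.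
Qed.

Lemma Gam_lf sg tu ty ty' c d :
  \sum_(j < m) c j * d j = 0 -> \sum_(j < m) d j * c j = 0 ->
  Gam (sel sg) (sel tu) (lf ty c) (lf ty' d) = 0.
Proof.
move=> h1 h2; rewrite /Gam.
under eq_bigr do rewrite !dsel -!scalerAl -!scalerAr !mul1r !scalerA -scalerDl.
rewrite -scaler_suml big_split /= !sum_if // addr0 scale0r //.
Qed.

Lemma Lop_lf sg tu ty c : Lop (sel sg) (sel tu) (lf ty c) = 0.
Proof. by rewrite /Lop big1 // => j _; rewrite dsel mderivC1. Qed.


Definition va (j : 'I_m) : C :=
  if val j == 0%N then 1 else if val j == 1%N then 'i else 0.
Definition vb (j : 'I_m) : C :=
  if val j == 2%N then 1 else if val j == 3%N then 'i else 0.

Lemma sum_ind (c : nat) : (c < m)%N -> \sum_(j < m) ((val j == c)%:R : C) = 1.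
Proof.
move=> h; rewrite (bigD1 (Ordinal h)) //= eqxx big1 ?addr0 // => j hj.
case: eqP => // hc; case/negP: hj; apply/eqP/val_inj => /=; exact: hc.
Qed.

Lemma ii : ('i : C) * 'i = -1.
Proof. by rewrite -expr2 sqrCi. Qed.

Hypothesis hm : (3 < m)%N.

Lemma dot_aa : \sum_(j < m) va j * va j = 0.
Proof.
rewrite (eq_bigr (fun j => ((val j == 0%N)%:R - (val j == 1%N)%:R : C))).
  by rewrite sumrB !sum_ind ?subrr // (ltn_trans _ hm).
move=> [[|[|j]] hj] _; rewrite /va /= ?ii ?mulr1 ?mul0r ?subr0 ?sub0r ?subrr //.
Qed.

Lemma dot_bb : \sum_(j < m) vb j * vb j = 0.
Proof.
rewrite (eq_bigr (fun j => ((val j == 2%N)%:R - (val j == 3%N)%:R : C))).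
  by rewrite sumrB !sum_ind ?subrr // (ltn_trans _ hm).
move=> [[|[|[|[|j]]]] hj] _; rewrite /vb /= ?ii ?mulr1 ?mul0r ?subr0 ?sub0r ?subrr //.
Qed.

Lemma dot_ab : \sum_(j < m) va j * vb j = 0.
Proof.
rewrite big1 // => -[[|[|[|[|j]]]] hj] _; rewrite /va /vb /= ?mulr0 ?mul0r //.
Qed.

Lemma dot_ba : \sum_(j < m) vb j * va j = 0.
Proof.
rewrite big1 // => -[[|[|[|[|j]]]] hj] _; rewrite /va /vb /= ?mulr0 ?mul0r //.
Qed.


Definition Gs (g : P) := exists ty c, (c = va \/ c = vb) /\ g = lf ty c.

Lemma dot_any c d : (c = va \/ c = vb) -> (d = va \/ d = vb) ->
  \sum_(j < m) c j * d j = 0.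
Proof.
case=> ->; case=> ->; [exact: dot_aa|exact: dot_ab|exact: dot_ba|exact: dot_bb].
Qed.

Lemma gen_L sg tu A : gen Gs A -> Lop (sel sg) (sel tu) A = 0.
Proof.
apply: gen_Lop.
  move=> g g' [ty [c [hc ->]]] [ty' [d [hd ->]]].
  by apply: Gam_lf; apply: dot_any.
by move=> g [ty [c [_ ->]]]; apply: Lop_lf.
Qed.

Lemma genX G (A : P) j : gen G A -> gen G (A ^+ j).
Proof.
move=> h; elim: j => [|j IH]; first by rewrite expr0 -[1 : P]scale1r; apply: genC.
by rewrite exprS; apply: genM.
Qed.

Lemma genB G (A B : P) : gen G A -> gen G B -> gen G (A - B).
Proof.
move=> hA hB; have -> : A - B = A + ((-1) *: 1) * B by rewrite scaleN1r mulN1r.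
by apply: genD => //; apply: genM => //; apply: genC.
Qed.

Definition Dpol : P := lx va * lu vb - lx vb * lu va.
Definition H0 (k l : nat) : P := lx va ^+ (k - l) * Dpol ^+ l.

Lemma gen_H0 k l : gen Gs (H0 k l).
Proof.
have ga : gen Gs (lx va) by apply: genG; exists true, va; split; [left|].
have gb : gen Gs (lx vb) by apply: genG; exists true, vb; split; [right|].
have ga' : gen Gs (lu va) by apply: genG; exists false, va; split; [left|].
have gb' : gen Gs (lu vb) by apply: genG; exists false, vb; split; [right|].
apply: genM; apply: genX => //.
by apply: genB; apply: genM.
Qed.

Lemma dxx j c : mderiv (xi j) (lx c) = c j *: 1.
Proof. exact: (dsel true true j c). Qed.
Lemma dxu j c : mderiv (xi j) (lu c) = 0.
Proof. by have := dsel true false j c; rewrite /= scale0r. Qed.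
Lemma dux j c : mderiv (ui j) (lx c) = 0.
Proof. by have := dsel false true j c; rewrite /= scale0r. Qed.
Lemma duu j c : mderiv (ui j) (lu c) = c j *: 1.
Proof. exact: (dsel false false j c). Qed.

Local Notation E := (@X_Du m).

Lemma EM (A B : P) : E (A * B) = E A * B + A * E B.
Proof.
rewrite /X_Du mulr_suml mulr_sumr -big_split /=; apply: eq_bigr => j _.
rewrite /du mderivM; ring.
Qed.
Lemma EB (A B : P) : E (A - B) = E A - E B.
Proof.
rewrite /X_Du -sumrB; apply: eq_bigr => j _; by rewrite /du mderivB mulrBr.
Qed.
Lemma E1 : E 1 = 0.
Proof.
rewrite /X_Du big1 // => j _.
by rewrite /du -[1 : P]scale1r mderivC1 mulr0.
Qed.
Lemma Elx c : E (lx c) = 0.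
Proof. by rewrite /X_Du big1 // => j _; rewrite /du dux mulr0. Qed.
Lemma Elu c : E (lu c) = lx c.
Proof.
rewrite /X_Du /lx; apply: eq_bigr => j _.
by rewrite /du duu -scalerAr mulr1.
Qed.
Lemma EX (A : P) j : E A = 0 -> E (A ^+ j) = 0.
Proof.
move=> h; elim: j => [|j IH]; first by rewrite expr0 E1.
by rewrite exprS EM h IH mul0r mulr0 addr0.
Qed.

Lemma E_H0 k l : E (H0 k l) = 0.
Proof.
have hD : E Dpol = 0.
  by rewrite /Dpol EB !EM !Elx !Elu !mul0r !add0r mulrC subrr.
by rewrite /H0 EM (EX _ (Elx va)) (EX _ hD) mul0r mulr0 addr0.
Qed.

Lemma bh_H0 k l : (l <= k)%N -> bihomog k l (H0 k l).
Proof.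
move=> hl.
have h := bhM (bhX (j := k - l) (@bh_lx va))
  (bhX (j := l) (bhB (bhM (@bh_lx va) (@bh_lu vb)) (bhM (@bh_lx vb) (@bh_lu va)))).
by move: h; rewrite !mul1n !mul0n add0n subnK.
Qed.

Lemma Hkl_H0 k l : (l <= k)%N -> Hkl k l (H0 k l).
Proof.
move=> hl; split; first exact: bh_H0.
have g := gen_H0 k l.
split; first exact: (gen_L true true g).
split; first exact: (gen_L false false g).
split; first exact: (gen_L false true g).
exact: E_H0.
Qed.

Lemma H0_neq0 k l : H0 k l != 0.
Proof.
have h0 : (0 < m)%N by apply: leq_trans hm.
have h2 : (2 < m)%N by apply: ltnW.
set i0 : 'I_m := Ordinal h0; set i2 : 'I_m := Ordinal h2.
have one : (1 *: 1 : P) != 0 by rewrite scale1r oner_neq0.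
have ha : lx va != 0.
  apply/negP => /eqP h; move: (dxx i0 va); rewrite h mderiv0 /va /= => e.
  by move: one; rewrite -e eqxx.
have hD : Dpol != 0.
  apply/negP => /eqP h.
  have := congr1 (fun p => mderiv (ui i2) (mderiv (xi i0) p)) h.
  rewrite /= /Dpol mderivB !mderivM !dxx !dxu /va /vb /=.
  rewrite scale0r !mulr0 mul0r !addr0 subr0 scale1r mul1r duu /= mderiv0 mderiv0.
  by move=> e; move: one; rewrite e eqxx.
by rewrite /H0 mulf_neq0 // expf_neq0.
Qed.

End S3.

Theorem lemma4p1 (m : nat) (hm : (4 < m)%N) (k l : nat) (hlk : (l <= k)%N) :
  (forall H : Pol m, Hkl k l H -> iter (k - l + 1) (@S_u m) H = 0) /\
  (forall j : nat, (j <= k - l)%N ->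
     exists H : Pol m, Hkl k l H /\ iter j (@S_u m) H <> 0).
Proof.
have inv H : Hkl k l H -> inv3 H.
  by case=> _ [hx [hu [hd _]]]; split => //; split.
split.
- move=> H hH; rewrite iter_S_u; last exact: inv.
  rewrite addn1; exact: iter_vanish.
- have hm3 : (3 < m)%N by exact: ltnW.
  have hH := Hkl_H0 hm3 hlk.
  move=> j hj; exists (H0 m k l); split; first exact: hH.
  rewrite iter_S_u; last exact: inv _ _ hH.
  apply/eqP; apply: (iter_neq0 hH _ hlk hj).
  exact: H0_neq0.
Qed.
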